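(* Consider the load-balancing system described in the context under any policy in $\Pi$, with $S$ the stationary state, and $\mu_{\max}=\max\{\mu_1,\mu_2\}$. Then $$\mathbb P\left(S_{1,2}\le \frac{p}{\mu_2}+\frac{\log N}{2\sqrt N}\right)\ge 1-e^{-\frac{\mu_1\mu_2\log^2N}{40\mu_{\max}}}.$$
   Context: System: $N$ identical servers. Jobs arrive according to a Poisson process of rate $\lambda N$ with $\lambda=1-N^{-\alpha}$, $0<\alpha<0.5$. Service times are Coxian-2 with parameters $(\mu_1,\mu_2,p)$, $\mu_1,\mu_2>0$, $0\le p<1$: a job in service completes phase 1 at rate $\mu_1$; then with probability $1-p$ it leaves, and with probability $p$ it enters phase 2, completed at rate $\mu_2$. It is assumed that $\frac{1}{\mu_1}+\frac{p}{\mu_2}=1$. Each server holds at most $b$ jobs (one in service, $b-1$ in buffer); jobs routed to a full server are discarded. $S_{i,m}(t)$ is the fraction of servers with at least $i$ jobs whose job in service is in phase $m$, $S_i=S_{i,1}+S_{i,2}$; the state space is $\mathcal S^{(N)}=\{s\in\mathbb R^{b\times2}: 1\ge s_{1,m}\ge\cdots\ge s_{b,m}\ge0,\ s_{1,1}+s_{1,2}\le1,\ Ns_{i,m}\in\mathbb N\}$, with $s_i=s_{i,1}+s_{i,2}$. Policies dispatch based on the state and make the CTMC irreducible; $S$ denotes the stationary state. $A_1(s)$ is the probability that an arriving job is routed to a busy server in state $s$. $\Pi$ is the set of policies with $A_1(s)\le 1/\sqrt N$ for all $s\in\mathcal S^{(N)}$ with $s_1\le\lambda+\frac{1+\mu_1+\mu_2}{\min\{(1-p)\mu_1,\mu_2\}}\frac{\log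 N}{\sqrt N}$. *)

(* Defs.v *)
From HB Require Import structures.
From mathcomp Require Import all_boot all_order all_algebra.
From mathcomp Require Import all_classical all_reals all_analysis.
Set Implicit Arguments. Unset Strict Implicit. Unset Printing Implicit Defensive.
Import Order.TTheory GRing.Theory Num.Theory.
Local Open Scope ring_scope.

(* Server classes of busy servers: (j, m) = server holding exactly j+1 jobs
   whose job in service is in phase m+1 (j < b, m < 2). *)
Definition cls (b : nat) := ('I_b * 'I_2)%type.
Definition ph1 : 'I_2 := ord0.
Definition ph2 : 'I_2 := ord_max.

(* This is in bijection with
   S^(N): N s_{i,m} = sum_{j >= i} (number of servers with exactly j jobs and
   phase m). *)
Definition state (N b : nat) :=
  {x : {ffun cls b -> 'I_N.+1} | (\sum_k (x k : nat) <= N)%N}.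

Definition cnt N b (x : state N b) (k : cls b) : nat := val x k.
Definition idle N b (x : state N b) : nat := (N - \sum_k cnt x k)%N.

Definition Sim (R : realType) N b (x : state N b) (i : nat) (m : 'I_2) : R :=
  (\sum_(k : cls b | (i <= k.1.+1)%N && (k.2 == m)) cnt x k)%:R / N%:R.
Definition S1 (R : realType) N b (x : state N b) : R := Sim R x 1 ph1 + Sim R x 1 ph2.

(* a server of class src (None = idle) turns into class dst (None = idle) *)
Definition moves N b (x y : state N b) (src dst : option (cls b)) : bool :=
  [forall k, cnt y k == (cnt x k - (src == Some k) + (dst == Some k))%N].

(* class reached by a new job at an idle server: 1 job, phase 1 *)
Definition newjob b : option (cls b) := omap (fun j => (j, ph1)) (insub 0%N).
(* class after an arrival to a server of class k (k.1.+1 < b) *)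
Definition up b (k : cls b) : option (cls b) :=
  omap (fun j => (j, k.2)) (insub k.1.+1).
(* class after a departure from a server holding j+1 jobs: the next job
   starts service in phase 1 *)
Definition down b (j : 'I_b) : option (cls b) :=
  if (j : nat) == 0%N then None else omap (fun j' => (j', ph1)) (insub j.-1).

(* Dispatching policy: A x c = probability that a job arriving in state x is
   routed to a server of class c (None = idle server). *)
Definition policy_ok (R : realType) N b (A : state N b -> option (cls b) -> R) :=
  forall x, (forall c, 0 <= A x c) /\ (\sum_c A x c = 1) /\
    (0 < A x None -> (0 < idle x)%N) /\
    (forall k, 0 < A x (Some k) -> (0 < cnt x k)%N).

Definition A1 (R : realType) N b (A : state N b -> option (cls b) -> R) x : R :=
  \sum_(k : cls b) A x (Some k).

(* Off-diagonal transition rates of the CTMC.  Arrivals at rate lam*N;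
   jobs routed to full servers (b jobs) are discarded (no state change). *)
Definition rate (R : realType) N b (lam mu1 mu2 p : R)
  (A : state N b -> option (cls b) -> R) (x y : state N b) : R :=
  if y == x then 0 else
    lam * N%:R * A x None * (moves x y None (newjob b))%:R
  + \sum_(k : cls b | (k.1.+1 < b)%N)
      lam * N%:R * A x (Some k) * (moves x y (Some k) (up k))%:R
  + \sum_(j : 'I_b) mu1 * (cnt x (j, ph1))%:R *
      (p * (moves x y (Some (j, ph1)) (Some (j, ph2)))%:R
       + (1 - p) * (moves x y (Some (j, ph1)) (down j))%:R)
  + \sum_(j : 'I_b) mu2 * (cnt x (j, ph2))%:R *
      (moves x y (Some (j, ph2)) (down j))%:R.

Definition irreducible (R : realType) N b (q : state N b -> state N b -> R) :=
  forall x y, connect [rel u v | 0 < q u v] x y.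

Definition stationary (R : realType) N b (q : state N b -> state N b -> R)
  (pi : state N b -> R) :=
  (forall x, 0 <= pi x) /\ (\sum_x pi x = 1) /\
  (forall y, \sum_x pi x * q x y = pi y * \sum_z q y z).

Definition in_Pi (R : realType) N b (lam mu1 mu2 p : R)
  (A : state N b -> option (cls b) -> R) :=
  forall x, S1 R x <= lam + (1 + mu1 + mu2) / Num.min ((1 - p) * mu1) mu2
                            * ln (N%:R : R) / Num.sqrt (N%:R)
            -> A1 A x <= 1 / Num.sqrt (N%:R).

(* Main.v *)
Require Import Defs.
From HB Require Import structures.
From mathcomp Require Import all_boot all_order all_algebra.
From mathcomp Require Import all_classical all_reals all_analysis.
From mathcomp Require Import zify ring lra.
Set Implicit Arguments. Unset Strict Implicit. Unset Printing Implicit Defensive.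
Import Order.TTheory GRing.Theory Num.Theory.
Local Open Scope ring_scope.

Definition n2 N b (x : state N b) : nat := (\sum_(j : 'I_b) cnt x (j, ph2))%N.
Definition n1 N b (x : state N b) : nat := (\sum_(j : 'I_b) cnt x (j, ph1))%N.
Definition isph2 b (o : option (cls b)) : nat :=
  if o is Some k then (k.2 == ph2) : nat else 0%N.

Lemma sum_split_nat (I : finType) (c s d : I -> nat) :
  (forall k, s k <= c k)%N ->
  (\sum_k (c k - s k + d k) + \sum_k s k = \sum_k c k + \sum_k d k)%N.
Proof. move=> H; rewrite -!big_split /=; apply: eq_bigr => k _; have := H k; lia. Qed.

Lemma sum_ind_ph2 b (o : option (cls b)) :
  (\sum_(j : 'I_b) (o == Some (j, ph2) : nat))%N = isph2 o.
Proof.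
case: o => [[j0 m0]|] /=; last by rewrite big1.
case: (eqVneq m0 ph2) => [->|ne].
- rewrite (bigD1 j0) //= eqxx big1 // => j nj.
  case: eqP => // [[e]]; by rewrite e eqxx in nj.
- rewrite big1 // => j _; case: eqP => // [[_ e]]; by rewrite e eqxx in ne.
Qed.

Lemma sum_ind_all b (o : option (cls b)) :
  (\sum_(k : cls b) (o == Some k : nat))%N = (o != None).
Proof.
case: o => [k0|] /=; last by rewrite big1.
rewrite (bigD1 k0) //= eqxx big1 // => k nk.
case: eqP => // [[e]]; by rewrite e eqxx in nk.
Qed.

Lemma moves_n2 N b (x y : state N b) src dst :
  moves x y src dst -> (forall k, src = Some k -> 0 < cnt x k)%N ->
  (n2 y + isph2 src = n2 x + isph2 dst)%N.
Proof.
move=> /forallP H Hs.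
have Hy j : cnt y (j, ph2) =
   (cnt x (j, ph2) - (src == Some (j, ph2)) + (dst == Some (j, ph2)))%N.
  by apply/eqP; exact: H.
rewrite /n2 (eq_bigr _ (fun j _ => Hy j)) -!sum_ind_ph2.
apply: (sum_split_nat (c := fun j => cnt x (j, ph2))) => j.
case: eqP => [e|] //; exact: Hs _ e.
Qed.

Lemma moves_exists N b (x : state N b) k0 dst :
  (0 < cnt x k0)%N -> exists y, moves x y (Some k0) dst.
Proof.
move=> Hk.
pose g k := (cnt x k - (Some k0 == Some k) + (dst == Some k))%N.
have Hsum : (\sum_k g k <= N)%N.
  have Hs : forall k, (((Some k0 == Some k) : nat) <= cnt x k)%N.
    by move=> k; case: eqP => // [[<-]].
  have E := @sum_split_nat _ (cnt x) (fun k => (Some k0 == Some k) : nat)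
     (fun k => (dst == Some k) : nat) Hs.
  rewrite !sum_ind_all /= in E.
  have Hx : (\sum_k cnt x k <= N)%N := valP x.
  have Hd : (((dst != None) : nat) <= 1)%N by case: (dst != None).
  by rewrite -(leq_add2r 1) /g E leq_add.
have Hg k : (g k < N.+1)%N.
  apply: (leq_ltn_trans _ (ltnSn _)); apply: leq_trans Hsum.
  by rewrite (bigD1 k) //= leq_addr.
have Hf : (\sum_k (([ffun k => inord (g k)] : {ffun cls b -> 'I_N.+1}) k : nat) <= N)%N.
  by under eq_bigr do rewrite ffunE inordK //.
exists (exist (fun f : {ffun cls b -> 'I_N.+1} => (\sum_k (f k : nat) <= N)%N) _ Hf); apply/forallP => k; by rewrite /cnt /= ffunE inordK.
Qed.

Lemma moves_uniq N b (x y y' : state N b) s d :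
  moves x y s d -> moves x y' s d -> y = y'.
Proof.
move=> /forallP H /forallP H'; apply: val_inj; apply/ffunP => k; apply: val_inj.
move: (H k) (H' k) => /eqP e /eqP e'; exact: (etrans e (esym e')).
Qed.

Definition mcount (R : realType) N b (x : state N b) s d : R :=
  \sum_y (moves x y s d)%:R.

Lemma mcount_eq1 (R : realType) N b (x y0 : state N b) s d :
  moves x y0 s d -> mcount R x s d = 1.
Proof.
move=> H; rewrite /mcount (bigD1 y0) //= H big1 ?addr0 // => y ny.
case: (boolP (moves x y s d)) => // Hm.
by rewrite (moves_uniq Hm H) eqxx in ny.
Qed.

Lemma mcount_le1 (R : realType) N b (x : state N b) s d :
  mcount R x s d <= 1.
Proof.
case: (pickP (fun y => moves x y s d)) => [y0 H | H].
  by rewrite (mcount_eq1 _ H).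
by rewrite /mcount big1 // => y _; rewrite H.
Qed.

Lemma mcount_ge0 (R : realType) N b (x : state N b) s d :
  0 <= mcount R x s d.
Proof. by apply: sumr_ge0 => y _; rewrite ler0n. Qed.

Lemma sum_moves_f (R : realType) N b (x : state N b) s d (f : state N b -> R) r :
  (forall y, moves x y s d -> f y = f x * r) ->
  \sum_y (moves x y s d)%:R * (f y - f x) = f x * (r - 1) * mcount R x s d.
Proof.
move=> H; rewrite /mcount big_distrr /=; apply: eq_bigr => y _.
case: (boolP (moves x y s d)) => Hm /=; last by rewrite !mul0r mulr0.
rewrite H //; ring.
Qed.

Definition fexp (R : realType) N b (th : R) (x : state N b) : R :=
  expR (th * (n2 x)%:R).

Lemma f_rel (R : realType) N b (th : R) (x y : state N b) s d :
  moves x y s d -> (forall k, s = Some k -> 0 < cnt x k)%N ->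
  fexp th y = fexp th x * expR (th * ((isph2 d)%:R - (isph2 s)%:R)).
Proof.
move=> Hm Hs; have E := moves_n2 Hm Hs.
have E' : (n2 y)%:R = (n2 x)%:R + (isph2 d)%:R - (isph2 s)%:R :> R.
  by rewrite -natrD -E natrD addrK.
rewrite /fexp -expRD E'; congr expR; ring.
Qed.

Lemma ph_newjob b : isph2 (newjob b) = 0%N.
Proof. by rewrite /newjob; case: insub. Qed.

Lemma ph_down b (j : 'I_b) : isph2 (Defs.down j) = 0%N.
Proof. by rewrite /Defs.down; case: ifP => // _; case: insub. Qed.

Lemma ph_up b (k : cls b) : (k.1.+1 < b)%N -> isph2 (Defs.up k) = isph2 (Some k).
Proof. by move=> H; rewrite /Defs.up (insubT (fun i => i < b)%N H). Qed.

Lemma stat_gen (R : realType) N b (q : state N b -> state N b -> R) pi f :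
  stationary q pi -> \sum_x pi x * \sum_y q x y * (f y - f x) = 0.
Proof.
case=> _ [_ st].
transitivity (\sum_x \sum_y pi x * q x y * f y
              - \sum_x pi x * f x * \sum_y q x y).
  rewrite -sumrB; apply: eq_bigr => x _.
  rewrite !big_distrr -sumrB /=; apply: eq_bigr => y _; ring.
rewrite exchange_big /=.
rewrite (eq_bigr (fun y => pi y * f y * \sum_z q y z)) ?subrr // => y _.
by rewrite -big_distrl /= st; ring.
Qed.

Lemma gen_bound (R : realType) N b (lam mu1 mu2 p th : R)
  (A : state N b -> option (cls b) -> R) (x : state N b) :
  0 <= th -> 0 <= mu1 -> 0 <= p ->
  (forall k, 0 <= A x (Some k)) ->
  (forall k, 0 < A x (Some k) -> (0 < cnt x k)%N) ->
  \sum_y rate lam mu1 mu2 p A x y * (fexp th y - fexp th x) <=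
  fexp th x * ((expR th - 1) * mu1 * p * (n1 x)%:R
               - (1 - expR (- th)) * mu2 * (n2 x)%:R).
Proof.
move=> th0 mu10 p0 A0 Apos.
set f := @fexp R N b th.
have E y : rate lam mu1 mu2 p A x y * (f y - f x) =
    lam * N%:R * A x None * (moves x y None (newjob b))%:R * (f y - f x)
  + \sum_(k : cls b | (k.1.+1 < b)%N)
      lam * N%:R * A x (Some k) * (moves x y (Some k) (Defs.up k))%:R * (f y - f x)
  + \sum_(j : 'I_b) mu1 * (cnt x (j, ph1))%:R *
      (p * (moves x y (Some (j, ph1)) (Some (j, ph2)))%:R
       + (1 - p) * (moves x y (Some (j, ph1)) (Defs.down j))%:R) * (f y - f x)
  + \sum_(j : 'I_b) mu2 * (cnt x (j, ph2))%:R *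
      (moves x y (Some (j, ph2)) (Defs.down j))%:R * (f y - f x).
  rewrite /rate; case: eqP => [->|_].
    by rewrite subrr mul0r mulr0 !big1 ?addr0 // => *; rewrite mulr0.
  by rewrite !mulrDl !big_distrl.
rewrite (eq_bigr _ (fun y _ => E y)) !big_split /=.
have H1 : \sum_y lam * N%:R * A x None * (moves x y None (newjob b))%:R * (f y - f x) = 0.
  under eq_bigr do rewrite -mulrA.
  rewrite -big_distrr /= (@sum_moves_f _ _ _ _ _ _ _ 1) ?subrr ?mulr0 ?mul0r ?mulr0 //.
  move=> y Hm; rewrite /f (f_rel th Hm) // ph_newjob subrr mulr0 expR0 //.
have H2 : \sum_y \sum_(k : cls b | (k.1.+1 < b)%N)
      lam * N%:R * A x (Some k) * (moves x y (Some k) (Defs.up k))%:R * (f y - f x) = 0.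
  rewrite exchange_big /= big1 // => k Hk.
  have [Az|Anz] := eqVneq (A x (Some k)) 0.
    by rewrite big1 // => y _; rewrite Az mulr0 !mul0r.
  have Ak : (0 < cnt x k)%N by apply: Apos; rewrite lt_def Anz A0.
  under eq_bigr do rewrite -mulrA.
  rewrite -big_distrr /= (@sum_moves_f _ _ _ _ _ _ _ 1) ?subrr ?mulr0 ?mul0r ?mulr0 //.
  move=> y Hm; rewrite /f (f_rel th Hm) ?ph_up // ?subrr ?mulr0 ?expR0 ?mulr1 //.
  by move=> k' [<-].
have H3 : \sum_y \sum_(j : 'I_b) mu1 * (cnt x (j, ph1))%:R *
      (p * (moves x y (Some (j, ph1)) (Some (j, ph2)))%:R
       + (1 - p) * (moves x y (Some (j, ph1)) (Defs.down j))%:R) * (f y - f x)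
    <= \sum_(j : 'I_b) mu1 * (cnt x (j, ph1))%:R * p * (f x * (expR th - 1)).
  rewrite exchange_big /=; apply: ler_sum => j _.
  have [cz|cnz] := posnP (cnt x (j, ph1)).
    by rewrite cz /= big1 ?mulr0 ?mul0r // => y _; rewrite !mul0r.
  have Hs : forall k, Some (j, ph1) = Some k -> (0 < cnt x k)%N by move=> k [<-].
  rewrite [leLHS](_ : _ = mu1 * (cnt x (j, ph1))%:R * p *
     \sum_y (moves x y (Some (j, ph1)) (Some (j, ph2)))%:R * (f y - f x)
    + mu1 * (cnt x (j, ph1))%:R * (1 - p) *
     \sum_y (moves x y (Some (j, ph1)) (Defs.down j))%:R * (f y - f x)); last first.
    rewrite !big_distrr -big_split /=; apply: eq_bigr => y _; ring.
  rewrite (@sum_moves_f _ _ _ _ _ _ _ (expR th)); last first.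
    by move=> y Hm; rewrite /f (f_rel th Hm Hs) /= subr0 mulr1.
  rewrite (@sum_moves_f _ _ _ _ _ _ _ 1); last first.
    by move=> y Hm; rewrite /f (f_rel th Hm Hs) ph_down /= subrr mulr0 expR0.
  rewrite subrr mulr0 mul0r mulr0 addr0.
  have fx0 : 0 <= f x by apply: ltW; apply: expR_gt0.
  have e1 : 0 <= expR th - 1 by rewrite subr_ge0 -expR0 ler_expR.
  apply: ler_wpM2l; first by rewrite !mulr_ge0 ?ler0n.
  by apply: ler_piMr; [exact: mulr_ge0 | exact: mcount_le1].
have H4 : \sum_y \sum_(j : 'I_b) mu2 * (cnt x (j, ph2))%:R *
      (moves x y (Some (j, ph2)) (Defs.down j))%:R * (f y - f x)
    = \sum_(j : 'I_b) mu2 * (cnt x (j, ph2))%:R * (f x * (expR (- th) - 1)).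
  rewrite exchange_big /=; apply: eq_bigr => j _.
  have [cz|cnz] := posnP (cnt x (j, ph2)).
    by rewrite cz /= big1 ?mulr0 ?mul0r // => y _; rewrite !mul0r.
  have Hs : forall k, Some (j, ph2) = Some k -> (0 < cnt x k)%N by move=> k [<-].
  under eq_bigr do rewrite -mulrA.
  rewrite -big_distrr /= (@sum_moves_f _ _ _ _ _ _ _ (expR (- th))); last first.
    by move=> y Hm; rewrite /f (f_rel th Hm Hs) ph_down /= sub0r mulrN1.
  have [y0 Hy0] := moves_exists (Defs.down j) cnz.
  by rewrite (mcount_eq1 _ Hy0) mulr1.
rewrite H1 H2 H4 !add0r.
apply: le_trans (lerD H3 (lexx _)) _.
rewrite /n1 /n2 !natr_sum !mulr_sumr -sumrB mulr_sumr -big_split /=.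
rewrite le_eqVlt; apply/orP; left; apply/eqP; apply: eq_bigr => j _; ring.
Qed.

Lemma n12_le N b (x : state N b) : (n1 x + n2 x <= N)%N.
Proof.
have Hx : (\sum_k cnt x k <= N)%N := valP x.
suff -> : (n1 x + n2 x = \sum_k cnt x k)%N by [].
rewrite /n1 /n2 -big_split /=.
rewrite (eq_bigr (fun k => cnt x (k.1, k.2))); last by case.
rewrite -(pair_bigA _ (fun j m => cnt x (j, m))) /=.
apply: eq_bigr => j _; rewrite big_ord_recl big_ord_recl big_ord0 addn0.
have -> : lift ord0 ord0 = ph2 :> 'I_2 by apply: val_inj.
by [].
Qed.

Lemma Sim_n2 (R : realType) N b (x : state N b) :
  Sim R x 1 ph2 = (n2 x)%:R / N%:R.
Proof.
rewrite /Sim; congr (_%:R / _).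
rewrite (eq_bigl (fun k : cls b => xpredT k.1 && (k.2 == ph2))) //.
rewrite (eq_bigr (fun k => cnt x (k.1, k.2))); last by case.
rewrite -(pair_big_dep xpredT (fun _ m => m == ph2) (fun j m => cnt x (j, m))) /=.
by apply: eq_bigr => j _; rewrite big_pred1_eq.
Qed.

Theorem lemma6 (R : realType) (N b : nat) (alpha mu1 mu2 p : R)
  (A : state N b -> option (cls b) -> R) (pi : state N b -> R) :
  (0 < N)%N -> (0 < b)%N ->
  0 < alpha -> alpha < 1 / 2 ->
  0 < mu1 -> 0 < mu2 -> 0 <= p -> p < 1 ->
  1 / mu1 + p / mu2 = 1 ->
  let lam := 1 - (N%:R : R) `^ (- alpha) in
  policy_ok A ->
  in_Pi lam mu1 mu2 p A ->
  irreducible (rate lam mu1 mu2 p A) ->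
  stationary (rate lam mu1 mu2 p A) pi ->
  \sum_(x | Sim R x 1 ph2 <= p / mu2 + ln (N%:R : R) / (2 * Num.sqrt (N%:R)))
     pi x
  >= 1 - expR (- (mu1 * mu2 * ln (N%:R : R) ^+ 2) / (40 * Num.max mu1 mu2)).
Proof.
move=> N0 b0 a0 a1 m10 m20 p0 p1 Hmu lam Hpol HPi Hirr Hst.
have [pi0 [pi1 _]] := Hst.
have [N1|N2] := eqVneq N 1%N.
  have -> : ln (N%:R : R) = 0 by rewrite N1 ln1.
  rewrite expr0n /= mulr0 oppr0 mul0r expR0 subrr.
  by apply: sumr_ge0 => x _.
have N2' : (2 <= N)%N by move: N0 N2; clear; lia.
set Nr := (N%:R : R).
have Nr2 : 2 <= Nr by rewrite /Nr (ler_nat R 2).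
set L := ln Nr.
have L0 : 0 < L by apply: ln_gt0; lra.
set sq := Num.sqrt Nr.
have sq0 : 0 < sq by rewrite sqrtr_gt0; lra.
have sq2 : sq ^+ 2 = Nr by rewrite sqr_sqrtr //; lra.
have Lsq : L <= 2 * (sq - 1).
  have hL : L = ln sq *+ 2 by rewrite /L -sq2 lnXn.
  have h : 1 + ln sq <= sq by have := expR_ge1Dx (ln sq); rewrite lnK // posrE.
  rewrite hL mulr2n; lra.
set t := L / (2 * sq).
have t0 : 0 < t by apply: divr_gt0; lra.
have t1 : t < 1 by rewrite /t ltr_pdivrMr; nra.
set th := t / 2.
have th0 : 0 <= th by rewrite /th; lra.
set e := expR th.
have e0 : 0 < e := expR_gt0 _.
have ez : e * expR (- th) = 1 by rewrite /e -expRD subrr expR0.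
have e1 : e - 1 <= t.
  have h1 : 1 - th <= expR (- th) by have := expR_ge1Dx (- th); lra.
  have h2 : (1 - th) * e <= 1 by nra.
  rewrite /th in h2 *; nra.
set f := @fexp R N b th.
have f0 : forall x, 0 <= f x by move=> x; apply: ltW; apply: expR_gt0.
set n2r := fun x : state N b => ((n2 x)%:R : R).
set M := \sum_x pi x * f x.
set S := \sum_x pi x * f x * n2r x.
set u := (e - 1) * mu1 * p.
set v := (1 - expR (- th)) * mu2.
have u0 : 0 <= u.
  rewrite /u !mulr_ge0 // ?(ltW m10) // subr_ge0 /e -expR0 ler_expR //.
have z1 : expR (- th) <= 1 by rewrite expR_le1 oppr_le0.
have z0 : 0 < expR (- th) := expR_gt0 _.
have v0 : 0 < v.
  rewrite /v mulr_gt0 // subr_gt0 expR_lt1 oppr_lt0 /th; lra.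

have M0 : 0 <= M by apply: sumr_ge0 => x _; rewrite mulr_ge0.
have HA : 0 <= u * Nr * M - (u + v) * S.
  have H0 := @stat_gen R N b _ pi f Hst.
  have H1 : \sum_x pi x * \sum_y rate lam mu1 mu2 p A x y * (f y - f x)
      <= \sum_x pi x * (f x * (u * Nr - (u + v) * n2r x)).
    apply: ler_sum => x _; apply: ler_wpM2l; first exact: pi0.
    have [Ax [_ [_ Ap]]] := Hpol x.
    apply: le_trans (@gen_bound R N b lam mu1 mu2 p th A x th0 (ltW m10) p0 (fun k => Ax (Some k)) Ap) _.
    apply: ler_wpM2l; first exact: f0.
    have hn : ((n1 x)%:R : R) + n2r x <= Nr.
      by rewrite /n2r /Nr -natrD ler_nat n12_le.
    rewrite -/u -/v /n2r in hn *.
    have hh : 0 <= u * (Nr - (n1 x)%:R - (n2 x)%:R). apply: mulr_ge0; first exact: u0. rewrite -addrA -opprD subr_ge0 //.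
    move: hh; rewrite !mulrBr mulrDl. lra.
  rewrite H0 in H1; apply: (le_trans H1).
  rewrite le_eqVlt; apply/orP; left; apply/eqP.
  rewrite /M /S !mulr_sumr -sumrB; apply: eq_bigr => x _; ring.
have q1 : mu1 * p + mu2 = mu1 * mu2.
  rewrite -[RHS]mul1r -Hmu; field; rewrite ?gt_eqF //.
have mx1 : mu1 <= Num.max mu1 mu2 by rewrite le_max lexx.
have mx2 : mu2 <= Num.max mu1 mu2 by rewrite le_max lexx orbT.
have q2 : 4 * p <= mu1 * mu2.
  have hh := mulr_ge0 (ltW m20) (sqr_ge0 (mu1 - 2)).
  have : mu1 * (4 * p) <= mu1 * (mu1 * mu2) by nra.
  by rewrite ler_pM2l.
set c := Nr * (p / mu2 + (e - 1) / 4).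
have key : u * Nr <= (u + v) * c.
  have hz : expR (- th) = e^-1 by rewrite expRN.
  have k0 : 0 <= mu1 * p + expR (- th) * (mu2 - 4 * p).
    case: (lerP 0 (mu2 - 4 * p)) => h.
      by apply: addr_ge0; [exact: mulr_ge0 (ltW m10) p0 | exact: mulr_ge0 (ltW z0) h].
    have : (mu2 - 4 * p) <= expR (- th) * (mu2 - 4 * p).
      by rewrite ler_nMl // ltW.
    nra.
  rewrite -subr_ge0.
  have hp : p = mu2 * (mu1 - 1) / mu1.
    have -> : mu2 * (mu1 - 1) = p * mu1 by rewrite mulrBr mulr1 mulrC -q1; ring.
    by rewrite mulfK // gt_eqF.
  have -> : (u + v) * c - u * Nr =
      Nr * ((e - 1) ^+ 2 / 4 * (mu1 * p + expR (- th) * (mu2 - 4 * p))).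
    rewrite /u /v /c hz hp; field.
    by rewrite !gt_eqF.
  apply: mulr_ge0; first lra.
  apply: mulr_ge0 => //; apply: divr_ge0; [exact: sqr_ge0 | lra].
have HB : S <= c * M.
  have h : (u + v) * S <= (u + v) * (c * M).
    apply: le_trans (_ : u * Nr * M <= _); first lra.
    by rewrite mulrA; apply: ler_wpM2r.
  by rewrite ler_pM2l // in h; lra.
have HC : M <= expR (th * c).
  have hx : forall x, expR (- (th * c)) * (pi x * f x - th * (pi x * f x * n2r x - c * (pi x * f x))) <= pi x.
    move=> x.
    have h := expR_ge1Dx (th * (c - n2r x)).
    have h1 : expR (- (th * c)) * expR (th * n2r x) * expR (th * (c - n2r x)) = 1.
      by rewrite -!expRD -expR0; congr expR; ring.
    have hid : pi x = expR (- (th * c)) * (pi x * f x) * expR (th * (c - n2r x)).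
      by rewrite -[LHS]mulr1 -h1 /f /fexp; ring.
    have K0 : 0 <= expR (- (th * c)) * (pi x * f x).
      by apply: mulr_ge0; [exact: ltW (expR_gt0 _) | exact: mulr_ge0 (pi0 x) (f0 x)].
    rewrite [leRHS]hid.
    rewrite (_ : expR (- (th * c)) * (pi x * f x - th * (pi x * f x * n2r x - c * (pi x * f x)))
       = expR (- (th * c)) * (pi x * f x) * (1 + th * (c - n2r x))); last by ring.
    by apply: ler_wpM2l.
  have hs : \sum_x expR (- (th * c)) * (pi x * f x - th * (pi x * f x * n2r x - c * (pi x * f x)))
     <= \sum_x pi x by apply: ler_sum => x _; exact: hx x.
  rewrite pi1 -mulr_sumr sumrB -mulr_sumr sumrB -mulr_sumr -/M -/S in hs.
  have hS : th * (S - c * M) <= 0 by apply: mulr_ge0_le0 => //; lra.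
  have hz' : expR (- (th * c)) * M <= 1.
    apply: le_trans hs; apply: ler_wpM2l; [exact: ltW (expR_gt0 _) | lra].
  have -> : M = expR (th * c) * (expR (- (th * c)) * M).
    by rewrite mulrA -expRD subrr expR0 mul1r.
  by rewrite -[leRHS]mulr1; apply: ler_wpM2l => //; exact: ltW (expR_gt0 _).
set T := Nr * (p / mu2 + t).
set P := fun x : state N b => Sim R x 1 ph2 <= p / mu2 + t.
have hnP : forall x, ~~ P x -> pi x <= expR (- (th * T)) * (pi x * f x).
  move=> x; rewrite /P -ltNge Sim_n2 -/Nr ltr_pdivlMr; last lra.
  move=> h.
  have h1 : th * T <= th * n2r x.
    by apply: ler_wpM2l => //; rewrite /T mulrC ltW.
  have h2 : expR (th * T) <= f x by rewrite /f /fexp ler_expR.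
  have h3 : pi x * expR (th * T) * expR (- (th * T)) <= pi x * f x * expR (- (th * T)).
    apply: ler_wpM2r; first exact: ltW (expR_gt0 _).
    by apply: ler_wpM2l => //; exact: pi0.
  rewrite -mulrA -expRD subrr expR0 mulr1 in h3.
  by rewrite [leRHS]mulrC.
have hsum : \sum_(x | ~~ P x) pi x <= expR (- (th * T)) * M.
  apply: (@le_trans _ _ (\sum_(x | ~~ P x) expR (- (th * T)) * (pi x * f x))).
    by apply: ler_sum => x hx; exact: hnP.
  rewrite -mulr_sumr; apply: ler_wpM2l; first exact: ltW (expR_gt0 _).
  rewrite /M [leRHS](bigID P) /= lerDr; apply: sumr_ge0 => x _.
  exact: mulr_ge0 (pi0 x) (f0 x).
have hsplit : \sum_x pi x = \sum_(x | P x) pi x + \sum_(x | ~~ P x) pi x.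
  by rewrite (bigID P).
rewrite pi1 in hsplit.
have hNt : Nr * t ^+ 2 = L ^+ 2 / 4.
  by rewrite /t -sq2; field; rewrite gt_eqF.
have mxp : 0 < Num.max mu1 mu2 by lra.
have hE : mu1 * mu2 * L ^+ 2 / (40 * Num.max mu1 mu2) <= L ^+ 2 / 20.
  rewrite ler_pdivrMr; last lra.
  have hm : mu1 * mu2 <= 2 * Num.max mu1 mu2 by nra.
  have := sqr_ge0 L; nra.
have hth : L ^+ 2 / 20 <= th * T - th * c.
  have -> : th * T - th * c = t / 2 * Nr * (t - (e - 1) / 4).
    by rewrite /th /T /c; ring.
  apply: (@le_trans _ _ (t / 2 * Nr * (3 * t / 4))).
    have -> : t / 2 * Nr * (3 * t / 4) = 3 / 8 * (Nr * t ^+ 2) by field.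
    rewrite hNt; have := sqr_ge0 L; lra.
  apply: ler_wpM2l; last lra.
  apply: mulr_ge0; lra.
have hfin : expR (- (th * T)) * M <= expR (- (mu1 * mu2 * L ^+ 2) / (40 * Num.max mu1 mu2)).
  apply: (@le_trans _ _ (expR (- (th * T)) * expR (th * c))).
    by apply: ler_wpM2l => //; exact: ltW (expR_gt0 _).
  rewrite -expRD ler_expR mulNr; lra.
rewrite /P in hsplit hsum; lra.
Qed.
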